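(* Let $0\le d\le N$ be integers. If $d=0$ or $d=N$ then $\dim\Lambda_{N,d}=0$; otherwise $\dim\Lambda_{N,d}=(d-1)(N-d-1)$.
   Context: For integers $0\le d\le N$, $\Lambda_{N,d}\subseteq\mathbb{R}^{d\times(N+1)}$ denotes the set of real matrices $\lambda=(\lambda_{i,n})$, with rows indexed by $1\le i\le d$ and columns indexed by $0\le n\le N$, satisfying: $\lambda_{i,0}=0$ for $1\le i\le d$; $\lambda_{i,N}=N$ for $1\le i\le d$; $\sum_{i=1}^d\lambda_{i,n}=dn$ for $0\le n\le N$; $\lambda_{i,n}\le\lambda_{i,n+1}$ for $1\le i\le d$, $0\le n<N$; $\lambda_{i,n}\le\lambda_{i-1,n-1}$ for $1<i\le d$, $0<n\le N$. (For $d=0$ this is the single empty $0\times(N+1)$ matrix.) The dimension of a polytope is the dimension of its affine hull. *)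

(* Defs.v *)
From HB Require Import structures.
From mathcomp Require Import all_boot all_order all_algebra.
Set Implicit Arguments. Unset Strict Implicit. Unset Printing Implicit Defensive.
Import Order.TTheory GRing.Theory Num.Theory.
Local Open Scope ring_scope.

(* Lambda_{N,d}: d x (N+1) matrices; row i (paper index 1..d) is 'I_d index i-1,
   column n (paper index 0..N) is 'I_(N.+1) index n. *)
Definition Lambda (R : realFieldType) (N d : nat) (lam : 'M[R]_(d, N.+1)) : Prop :=
  [/\ (forall i : 'I_d, lam i ord0 = 0),
      (forall i : 'I_d, lam i ord_max = N%:R),
      (forall n : 'I_N.+1, \sum_(i < d) lam i n = (d * n)%N%:R),
      (forall (i : 'I_d) (n n' : 'I_N.+1), val n' = (val n).+1 -> lam i n <= lam i n')
    & (forall (i i' : 'I_d) (n n' : 'I_N.+1),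
          val i = (val i').+1 -> val n = (val n').+1 -> lam i n <= lam i' n')].

(* The dimension of (the affine hull of) a nonempty set S of vectors is k:
   the direction space of the affine hull, i.e. the smallest subspace containing
   all differences x - y of points of S, has dimension k. *)
Definition aff_dim (R : fieldType) (vT : vectType R) (S : vT -> Prop) (k : nat) : Prop :=
  (exists x, S x) /\
  exists V : {vspace vT},
    [/\ (forall x y, S x -> S y -> x - y \in V),
        (forall W : {vspace vT}, (forall x y, S x -> S y -> x - y \in W) -> (V <= W)%VS)
      & \dim V = k].

(* Main.v *)
Require Import Defs.
From HB Require Import structures.
From mathcomp Require Import all_boot all_order all_algebra.
From mathcomp Require Import zify ring lra.
Set Implicit Arguments. Unset Strict Implicit. Unset Printing Implicit Defensive.
Import Order.TTheory GRing.Theory Num.Theory.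

Ltac cl := repeat (case: ifP => ?); lia.

Lemma count_lt D n : (\sum_(i < D) (if (n <= i)%N then 0 else 1))%N = minn D n.
Proof.
elim: D => [|D IH]; first by rewrite big_ord0 min0n.
rewrite big_ord_recr /= IH; cl.
Qed.

Definition Pm (m D i n : nat) : nat :=
  if (n <= i)%N then 0%N else if (m + i < n)%N then (m + D)%N else (n + D - i.*2 - 1)%N.

Lemma Pm_sum m D n : (n <= m + D)%N -> (\sum_(i < D) Pm m D i n = D * n)%N.
Proof.
elim: D n => [|D IH] n hn; first by rewrite big_ord0.
rewrite big_ord_recr /=.
have [hn'|hn'] := leqP n (m + D).
- have -> : (\sum_(i < D) Pm m D.+1 i n = \sum_(i < D) (Pm m D i n + (if (n <= i)%N then 0 else 1)))%N.
    apply: eq_bigr => i _; rewrite /Pm; have := ltn_ord i; cl.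
  rewrite big_split /= IH // count_lt /Pm; cl.
- have En : n = (m + D).+1 by lia.
  have -> : (\sum_(i < D) Pm m D.+1 i n = \sum_(i < D) (m + D.+1))%N.
    apply: eq_bigr => i _; rewrite /Pm; have := ltn_ord i; cl.
  by rewrite sum_nat_const card_ord /Pm; cl.
Qed.

Definition freec m r n := (r < n)%N && (n <= m + r)%N.
Definition paramc m D r n := [&& (r.+2 <= n)%N, (n <= m + r)%N & (r.+2 <= D)%N].

Local Open Scope ring_scope.

Section PhiSec.
Context {R : realFieldType}.

Definition Ssum m D (g : nat -> nat -> R) n :=
  \sum_(i < D) (if paramc m D i n then g (i:nat) (n - i.+2)%N else 0).
Definition Phi m D (g : nat -> nat -> R) (r n : nat) : R :=
  if paramc m D r n then g r (n - r.+2)%N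
  else if freec m r n then - Ssum m D g n else 0.

Lemma Phi_nf m D g r n : ~~ freec m r n -> Phi m D g r n = 0.
Proof.
rewrite /Phi /freec /paramc => h; case: ifP; last by rewrite (negbTE h).
lia.
Qed.

Lemma bnd_uniq m D r r' n : (r < D)%N -> (r' < D)%N ->
  ~~ paramc m D r n && freec m r n -> ~~ paramc m D r' n && freec m r' n -> r = r'.
Proof. rewrite /paramc /freec; lia. Qed.

Lemma bnd_ex m D i n : (i < D)%N -> paramc m D i n ->
  ((minn n D).-1 < D)%N && (~~ paramc m D (minn n D).-1 n && freec m (minn n D).-1 n).
Proof. rewrite /paramc /freec; lia. Qed.

Lemma Phi_col m D g n : \sum_(i < D) Phi m D g i n = 0.
Proof.
rewrite (eq_bigr (fun i : 'I_D => (if paramc m D i n then g i (n - i.+2)%N else 0) +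
   (if ~~ paramc m D i n && freec m i n then - Ssum m D g n else 0))); last first.
  move=> i _; rewrite /Phi; case: ifP => /= _; first by rewrite addr0.
  by case: ifP => _; rewrite add0r.
rewrite big_split /= -/(Ssum m D g n).
case: (boolP [exists i : 'I_D, ~~ paramc m D i n && freec m i n]).
- case/existsP => i0 hi0; rewrite (bigD1 i0) //= hi0 big1 ?addr0 ?subrr //.
  move=> i hi; case: ifP => // hb; case/eqP: hi; apply/val_inj.
  exact: (bnd_uniq (ltn_ord i) (ltn_ord i0) hb hi0).
- move=> hn; rewrite big1 ?addr0; last first.
    move=> i _; case: ifP => // hb; case/negP: hn; apply/existsP; by exists i.
  rewrite /Ssum big1 // => i _; case: ifP => // hp.
  have /andP [h1 h2] := bnd_ex (ltn_ord i) hp.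
  case/negP: hn; apply/existsP; by exists (Ordinal h1).
Qed.

Lemma Phi_ext m D g g' r n :
  (forall i, paramc m D i n -> g i (n - i.+2)%N = g' i (n - i.+2)%N) ->
  Phi m D g r n = Phi m D g' r n.
Proof.
move=> h; rewrite /Phi /Ssum; case: ifP => hp; first exact: h.
case: ifP => // _; congr (- _); apply: eq_bigr => i _; case: ifP => // hq; exact: h.
Qed.

Lemma Phi_lin m D g g1 g2 c r n : (forall i j, g i j = c * g1 i j + g2 i j) ->
  Phi m D g r n = c * Phi m D g1 r n + Phi m D g2 r n.
Proof.
move=> h; rewrite /Phi /Ssum; case: ifP => _; first exact: h.
case: ifP => _; last by rewrite mulr0 addr0.
rewrite (eq_bigr (fun i : 'I_D => c * (if paramc m D i n then g1 i (n - i.+2)%N else 0) +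
   (if paramc m D i n then g2 i (n - i.+2)%N else 0))).
  by rewrite big_split /= -mulr_sumr opprD mulrN.
by move=> i _; case: ifP => _; [apply: h | rewrite mulr0 addr0].
Qed.

Lemma Phi_decomp m D (G : nat -> nat -> R) (r : 'I_D) n :
  (forall i, (i < D)%N -> ~~ freec m i n -> G i n = 0) ->
  \sum_(i < D) G i n = 0 ->
  Phi m D (fun a b => G a (a + b.+2)%N) r n = G r n.
Proof.
move=> hz hs; rewrite /Phi.
case: ifP => hp.
  congr G; move: hp; rewrite /paramc; lia.
case: ifP => hf; last by rewrite hz // hf.
have hb : ~~ paramc m D r n && freec m r n by rewrite hp hf.
apply/eqP; rewrite eq_sym -subr_eq0 opprK; apply/eqP; rewrite -[RHS]hs.
rewrite /Ssum.
rewrite [RHS](eq_bigr (fun i : 'I_D => (if paramc m D i n then G i n else 0) +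
   (if i == r then G i n else 0))); last first.
  move=> i _; case: ifP => hpi.
    have -> : (i == r) = false.
      by apply/negbTE; apply/negP => /eqP E; rewrite E hp in hpi.
    by rewrite addr0.
  case: ifP => hir; first by rewrite (eqP hir) add0r.
  rewrite add0r; case: (boolP (freec m i n)) => hfi; last exact: hz.
  have := bnd_uniq (ltn_ord i) (ltn_ord r) _ hb; rewrite hpi hfi => /(_ isT) E.
  by case/negP: (negbT hir); apply/eqP/val_inj.
rewrite big_split /= [RHS]addrC; congr (_ + _); first by rewrite -big_mkcond big_pred1_eq.
apply: eq_bigr => i _; case: ifP => // hq; congr G; move: hq; rewrite /paramc; lia.
Qed.

End PhiSec.

Section Part2.
Context {R : realFieldType}.

Definition LamN m D (G : nat -> nat -> R) : Prop :=
  [/\ (forall r, (r < D)%N -> G r 0%N = 0),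
      (forall r, (r < D)%N -> G r (m + D)%N = (m + D)%:R),
      (forall n, (n <= m + D)%N -> \sum_(i < D) G i n = (D * n)%:R),
      (forall r n, (r < D)%N -> (n < m + D)%N -> G r n <= G r n.+1)
    & (forall r n, (r.+1 < D)%N -> (n < m + D)%N -> G r.+1 n.+1 <= G r n)].

Lemma Lam_to_N m d' (l : 'M[R]_(d'.+1, (m + d'.+1).+1)) :
  Lambda l -> LamN m d'.+1 (fun r n => l (inord r) (inord n)).
Proof.
case=> h0 hN hs hm hd; split.
- move=> r hr; have -> : (inord 0 : 'I_(m + d'.+1).+1) = ord0.
    by apply: ord_inj; rewrite inordK.
  exact: h0.
- move=> r hr; have -> : (inord (m + d'.+1) : 'I_(m + d'.+1).+1) = ord_max.
    by apply: ord_inj; rewrite inordK.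
  exact: hN.
- move=> n hn; rewrite (eq_bigr (fun i : 'I_d'.+1 => l i (inord n))).
    by have := hs (inord n); rewrite inordK ?ltnS.
  by move=> i _; rewrite inord_val.
- move=> r n hr hn; apply: hm; rewrite /= !inordK //; lia.
- move=> r n hr hn; apply: hd; rewrite /= !inordK //; lia.
Qed.

Lemma N_to_Lam m d' (G : nat -> nat -> R) : LamN m d'.+1 G ->
  Lambda (\matrix_(i < d'.+1, j < (m + d'.+1).+1) G i j).
Proof.
case=> h0 hN hs hm hd; split.
- by move=> i; rewrite mxE; apply: h0.
- by move=> i; rewrite mxE; apply: hN.
- move=> n; rewrite (eq_bigr (fun i : 'I_d'.+1 => G i n)).
    by apply: hs; rewrite -ltnS.
  by move=> i _; rewrite mxE.
- move=> i n n' /= e; rewrite !mxE e; apply: hm => //; have := ltn_ord n'; lia.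
- move=> i i' n n' /= ei en; rewrite !mxE ei en; apply: hd; first by rewrite -ei.
  have := ltn_ord n; lia.
Qed.

Section LamNprops.
Variables (m D : nat) (G : nat -> nat -> R).
Hypothesis hG : LamN m D G.

Lemma LamN_chain r n n' : (r < D)%N -> (n <= n')%N -> (n' <= m + D)%N -> G r n <= G r n'.
Proof.
case: hG => h0 hN hs hm hd hr.
elim: n' => [|n' IH] hnn hn'; first by have -> : n = 0%N by lia.
have [->|hne] := eqVneq n n'.+1; first by [].
apply: le_trans (IH _ _) (hm _ _ hr _); lia.
Qed.

Lemma LamN_zero n r : (r < D)%N -> (n <= r)%N -> G r n = 0.
Proof.
case: hG => h0 hN hs hm hd.
elim: n r => [|n IH] r hr hn; first exact: h0.
apply/le_anti/andP; split.
  case: r hr hn => [|r] hr hn //.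
  have e : G r n = 0 by apply: IH; lia.
  rewrite -e; apply: hd; lia.
rewrite -(h0 r hr); apply: LamN_chain => //; lia.
Qed.

Lemma LamN_top k r n : (n + k = m + D)%N -> (r < D)%N -> (m + r < n)%N ->
  G r n = (m + D)%:R.
Proof.
case: hG => h0 hN hs hm hd.
elim: k r n => [|k IH] r n hk hr hn; first by rewrite addn0 in hk; rewrite hk; apply: hN.
apply/le_anti/andP; split.
  rewrite -(hN r hr); apply: LamN_chain => //; lia.
have e : G r.+1 n.+1 = (m + D)%:R by apply: (IH r.+1 n.+1); lia.
rewrite -e; apply: hd; lia.
Qed.

Lemma LamN_nf r n : (r < D)%N -> (n <= m + D)%N -> ~~ freec m r n ->
  G r n = if (n <= r)%N then 0 else (m + D)%:R.
Proof.
move=> hr hn; rewrite /freec; case: ifP => h1 h2; first exact: LamN_zero.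
apply: (@LamN_top (m + D - n)) => //; lia.
Qed.

End LamNprops.

Lemma mono_nat m D r n : (r < D)%N -> (n < m + D)%N ->
  (Pm m D r n + 1 <= Pm m D r n.+1)%N ||
  [&& ~~ freec m r n, ~~ freec m r n.+1 & (Pm m D r n <= Pm m D r n.+1)%N].
Proof. rewrite /Pm /freec; cl. Qed.

Lemma diag_nat m D r n : (r.+1 < D)%N -> (n < m + D)%N ->
  (Pm m D r.+1 n.+1 + 1 <= Pm m D r n)%N ||
  [&& ~~ freec m r.+1 n.+1, ~~ freec m r n & (Pm m D r.+1 n.+1 <= Pm m D r n)%N].
Proof. rewrite /Pm /freec; cl. Qed.

Lemma step_ineq (a b : nat) (va vb : R) :
  `|va| <= 2^-1 -> `|vb| <= 2^-1 ->
  (a + 1 <= b)%N || [&& va == 0, vb == 0 & (a <= b)%N] ->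
  a%:R + va <= b%:R + vb.
Proof.
rewrite !ler_norml => /andP [h1 h2] /andP [h3 h4] /orP [h|/and3P [/eqP -> /eqP -> h]].
  have : (a + 1)%:R <= b%:R :> R by rewrite ler_nat.
  rewrite natrD => h'.
  lra.
by rewrite !addr0 ler_nat.
Qed.

Lemma LamN_pert m D (P : nat -> nat -> R) s :
  (forall r n, ~~ freec m r n -> P r n = 0) ->
  (forall n, \sum_(i < D) P i n = 0) ->
  (forall r n, (r < D)%N -> (n <= m + D)%N -> `|s * P r n| <= 2^-1) ->
  LamN m D (fun r n => (Pm m D r n)%:R + s * P r n).
Proof.
move=> hz hs hb; split.
- move=> r hr /=; rewrite hz ?mulr0 ?addr0; last by rewrite /freec; lia.
  by rewrite /Pm leq0n.
- move=> r hr /=; rewrite hz ?mulr0 ?addr0; last by rewrite /freec; lia.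
  rewrite /Pm; case: ifP => h1; first lia.
  by case: ifP => h2 //; lia.
- move=> n hn /=; rewrite big_split /= -natr_sum Pm_sum // -mulr_sumr hs mulr0 addr0.
  done.
- move=> r n hr hn /=; apply: step_ineq; [apply: hb; lia | apply: hb; lia |].
  case/orP: (mono_nat hr hn) => [->//|/and3P [f1 f2 f3]].
  by rewrite hz // hz // mulr0 eqxx f3 orbT.
- move=> r n hr hn /=; apply: step_ineq; [apply: hb; lia | apply: hb; lia |].
  case/orP: (diag_nat hr hn) => [->//|/and3P [f1 f2 f3]].
  by rewrite hz // hz // mulr0 eqxx f3 orbT.
Qed.

Definition get (a b : nat) (x : 'M[R]_(a, b)) (i j : nat) : R :=
  match (insub i : option 'I_a), (insub j : option 'I_b) with
  | Some i', Some j' => x i' j' | _, _ => 0 end.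

Lemma getE a b (x : 'M[R]_(a, b)) i j (hi : (i < a)%N) (hj : (j < b)%N) :
  get x i j = x (Ordinal hi) (Ordinal hj).
Proof. by rewrite /get (@insubT _ _ 'I_a i hi) (@insubT _ _ 'I_b j hj). Qed.

Lemma get_lin a b (x y : 'M[R]_(a, b)) c i j :
  get (c *: x + y) i j = c * get x i j + get y i j.
Proof.
rewrite /get; case: (insub i : option 'I_a) => [i'|]; case: (insub j : option 'I_b) => [j'|];
  by rewrite ?mxE ?mulr0 ?addr0.
Qed.

Definition phi m d' (x : 'M[R]_(d', m - 1)) : 'M[R]_(d'.+1, (m + d'.+1).+1) :=
  \matrix_(r, n) Phi m d'.+1 (get x) r n.

Lemma phi_lin m d' : linear (@phi m d').
Proof.
move=> c x y; apply/matrixP => r n; rewrite !mxE.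
by apply: Phi_lin => i j; rewrite get_lin.
Qed.

End Part2.

HB.instance Definition _ (R : realFieldType) m d' :=
  GRing.isLinear.Build R 'M[R]_(d', m - 1) 'M[R]_(d'.+1, (m + d'.+1).+1) *:%R
    (@phi R m d') (@phi_lin R m d').

Lemma phi_inj_key (R : realFieldType) m d' (x : 'M[R]_(d', m - 1)) (i : 'I_d') (j : 'I_(m - 1)) :
  phi x (inord i) (inord (i + j.+2)) = x i j.
Proof.
have hi := ltn_ord i; have hj := ltn_ord j.
rewrite mxE !inordK; [| lia | lia].
rewrite /Phi.
have -> : paramc m d'.+1 i (i + j.+2) by rewrite /paramc; lia.
have -> : (i + j.+2 - i.+2 = j)%N by lia.
rewrite (getE x hi hj); by congr (x _ _); apply: val_inj.
Qed.

Local Close Scope ring_scope.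

Theorem theorem3p2 (R : realFieldType) (N d : nat) (hdN : (d <= N)%N) :
  aff_dim (@Lambda R N d)
    (if (d == 0%N) || (d == N) then 0%N else ((d - 1) * (N - d - 1))%N).
Proof.
case: d hdN => [|d'] hdN.
  rewrite eqxx /=; split.
    exists 0%R; split; try by case.
    by move=> n; rewrite big_ord0 mul0n.
  exists 0%VS; split.
  - by move=> x y _ _; rewrite memv0 [(x - y)%R]flatmx0.
  - by move=> W _; apply: sub0v.
  - by rewrite dimv0.
move: (subnK hdN) => E; set m := N - d'.+1 in E; clearbody m; subst N.
have -> : (if (d'.+1 == 0%N) || (d'.+1 == m + d'.+1) then 0%N
   else ((d'.+1 - 1) * (m + d'.+1 - d'.+1 - 1))%N) = (d' * (m - 1))%N.
  by case: ifP; lia.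
pose f := linfun (@phi R m d').
have fE : forall u (i : 'I_d'.+1) (j : 'I_(m + d'.+1).+1),
    f u i j = Phi m d'.+1 (get u) i j.
  by move=> u i j; rewrite lfunE /= mxE.
split.
  exists (\matrix_(i < d'.+1, j < (m + d'.+1).+1) ((Pm m d'.+1 i j)%:R + 0 * 0))%R.
  apply: (N_to_Lam (G := fun r n => ((Pm m d'.+1 r n)%:R + 0 * 0)%R)).
  apply: (LamN_pert (P := fun _ _ => 0%R)) => //.
  - by move=> n; rewrite big1.
  - by move=> *; rewrite mulr0 normr0 invr_ge0 ler0n.
exists (limg f); split.
- move=> x y hx hy.
  have hX := Lam_to_N hx; have hY := Lam_to_N hy.
  pose H (a n : nat) := (x (inord a) (inord n) - y (inord a) (inord n))%R.
  pose u : 'M[R]_(d', m - 1) := (\matrix_(i, j) H i (i + j.+2)%N)%R.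
  have -> : (x - y)%R = f u.
    apply/matrixP => r n; rewrite fE mxE.
    rewrite (@Phi_ext _ _ _ _ (fun a b => H a (a + b.+2))); last first.
      move=> i hp.
      have hi : (i < d')%N by move: hp; rewrite /paramc; lia.
      have hj : (n - i.+2 < m - 1)%N by move: hp; rewrite /paramc; lia.
      by rewrite (getE u hi hj) mxE.
    rewrite (@Phi_decomp _ m d'.+1 H r n).
    + by rewrite /H !inord_val mxE.
    + move=> i hi hf; have hn := ltn_ord n.
      rewrite /H (LamN_nf hX) ?(LamN_nf hY) ?subrr //; lia.
    + rewrite /H sumrB.
      have hn : (n <= m + d'.+1)%N by have := ltn_ord n; lia.
      case: hX => _ _ sX _ _; case: hY => _ _ sY _ _.
      by rewrite sX // sY // subrr.
  by apply: memv_img; rewrite memvf.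
- move=> W hW; apply/subvP => v /memv_imgP [u _ ->].
  pose Ph := Phi m d'.+1 (get u).
  have hv : forall r n, (r < d'.+1)%N -> (n <= m + d'.+1)%N ->
      f u (inord r) (inord n) = Ph r n.
    by move=> r n hr hn; rewrite fE !inordK.
  pose S := (\sum_(i < d'.+1) \sum_(j < (m + d'.+1).+1) `|f u i j|)%R.
  have S0 : (0 <= S)%R by apply: sumr_ge0 => i _; apply: sumr_ge0.
  have hS : forall i j, (`|f u i j| <= S)%R.
    move=> i j; rewrite /S (bigD1 i) //= (bigD1 j) //= -addrA lerDl.
    by apply: addr_ge0; apply: sumr_ge0 => *; [|apply: sumr_ge0].
  pose t := ((2 * (1 + S))^-1)%R.
  have h2 : (0 < 2 * (1 + S))%R by apply: mulr_gt0 => //; lra.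
  have ht : (0 < t)%R by rewrite invr_gt0.
  have htS : (t * (2 * (1 + S)) = 1)%R by rewrite mulVf // gt_eqF.
  have hb : forall r n, (r < d'.+1)%N -> (n <= m + d'.+1)%N ->
      (`|t * Ph r n| <= 2^-1)%R.
    move=> r n hr hn; rewrite -hv // normrM (gtr0_norm ht).
    have := hS (inord r) (inord n); have := normr_ge0 (f u (inord r) (inord n)).
    move=> ha haS.
    have -> : (2^-1 = t * (1 + S))%R.
      apply: (mulIf (x := 2%R)); first by rewrite pnatr_eq0.
      rewrite mulVf; last by rewrite pnatr_eq0.
      rewrite -[X in X = _]htS; ring.
    by apply: ler_wpM2l; [lra | lra].
  have hb0 : forall r n, (r < d'.+1)%N -> (n <= m + d'.+1)%N ->
      (`|0 * Ph r n| <= 2^-1)%R.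
    by move=> *; rewrite mul0r normr0 invr_ge0 ler0n.
  have hq := N_to_Lam (LamN_pert (s := t) (P := Ph)
     (fun r n h => @Phi_nf _ m d'.+1 (get u) r n h) (fun n => @Phi_col _ m d'.+1 (get u) n) hb).
  have hp := N_to_Lam (LamN_pert (s := 0%R) (P := Ph)
     (fun r n h => @Phi_nf _ m d'.+1 (get u) r n h) (fun n => @Phi_col _ m d'.+1 (get u) n)
     hb0).
  have := hW _ _ hq hp.
  set q := (\matrix_(_, _) _)%R; set p := (\matrix_(_, _) _)%R.
  have -> : (q - p = t *: f u)%R.
    by apply/matrixP => i j; rewrite !mxE fE mul0r addr0 addrAC subrr add0r.
  move=> h; have := memvZ t^-1 h; rewrite scalerA mulVf ?scale1r //.
  by rewrite gt_eqF.
- rewrite limg_dim_eq ?dimvf ?dim_matrix // capfv; apply/eqP/lker0P => x y hxy.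
  apply/matrixP => i j.
  have := congr1 (fun M : 'M[R]_(d'.+1, (m + d'.+1).+1) => M (inord i) (inord (i + j.+2))) hxy.
  by rewrite /= !lfunE /= !phi_inj_key.
Qed.
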